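(* Let $J\subseteq S$. If $\Pi_\downarrow^J(u)=\Pi_\downarrow^J(v)$ for some $u,v\in\mathfrak{S}_n^J$, then $\Pi_\uparrow^J(u)=\Pi_\uparrow^J(v)$.
   Context: $\mathfrak{S}_n$ is the symmetric group on $[n]$, $s_i=(i,i+1)$, $S=\{s_1,\dots,s_{n-1}\}$, one-line notation $w=w_1\cdots w_n$, $\mathrm{inv}(w)=\{(i,j):i<j,\ w_i>w_j\}$, weak order $u\le_S v\iff\mathrm{inv}(u)\subseteq\mathrm{inv}(v)$. For $J\subseteq S$, $\mathfrak{S}_n^J$ is the set of $w$ with $w_i<w_{i+1}$ whenever $s_i\in J$. Writing $J=S\setminus\{s_{j_1},\dots,s_{j_r}\}$ with $j_1<\dots<j_r$, the $J$-regions are $\{1,\dots,j_1\},\{j_1+1,\dots,j_2\},\dots,\{j_r+1,\dots,n\}$. $w\in\mathfrak{S}_n^J$ is $(J,231)$-avoiding if there are no indices $i<j<k$ in pairwise different $J$-regions with $w_k<w_i<w_j$ and $w_i=w_k+1$, and $(J,132)$-avoiding if there are no indices $i<j<k$ in pairwise different $J$-regions with $w_i<w_k<w_j$ and $w_k=w_i+1$. For $w\in\mathfrak{S}_n^J$, $\Pi_\downarrow^J(w)$ is the unique greatest $(J,231)$-avoiding element of $\mathfrak{S}_n^J$ that is $\le_S w$, and $\Pi_\uparrow^J(w)$ is the unique least $(J,132)$-avoiding element of $\mathfrak{S}_n^J$ that is $\ge_S w$ (both exist). *)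

(* Defs.v *)
(* Permutations of [n] are modelled as 'S_n (perms of 'I_n);
   positions and values are 0-based (shift by 1 from the paper). *)
From mathcomp Require Import all_boot all_fingroup.
Set Implicit Arguments. Unset Strict Implicit. Unset Printing Implicit Defensive.

(* J ⊆ S is a set of indices 'I_n.-1; the 0-based index k stands for the
   simple transposition s_{k+1} = (k+1,k+2), swapping 0-based positions k, k+1. *)
Definition inJ (n : nat) (J : {set 'I_n.-1}) (k : nat) : bool :=
  [exists j : 'I_n.-1, (val j == k) && (j \in J)].

Definition is_inv (n : nat) (w : 'S_n) (i j : 'I_n) : bool :=
  (i < j) && (w j < w i).

Definition weak_le (n : nat) (u v : 'S_n) : Prop :=
  forall i j : 'I_n, is_inv u i j -> is_inv v i j.

Definition in_SJ (n : nat) (J : {set 'I_n.-1}) (w : 'S_n) : Prop :=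
  forall i j : 'I_n, j = i.+1 :> nat -> inJ J i -> w i < w j.

Definition same_region (n : nat) (J : {set 'I_n.-1}) (p q : 'I_n) : bool :=
  [forall k : 'I_n.-1, ((minn p q <= k) && (k < maxn p q)) ==> (k \in J)].

Definition diff_regions3 (n : nat) (J : {set 'I_n.-1}) (i j k : 'I_n) : Prop :=
  ~~ same_region J i j /\ ~~ same_region J j k /\ ~~ same_region J i k.

Definition J231_avoiding (n : nat) (J : {set 'I_n.-1}) (w : 'S_n) : Prop :=
  ~ exists i j k : 'I_n, [/\ i < j < k, diff_regions3 J i j k,
      w k < w i, w i < w j & (w i : nat) = (w k).+1].

Definition J132_avoiding (n : nat) (J : {set 'I_n.-1}) (w : 'S_n) : Prop :=
  ~ exists i j k : 'I_n, [/\ i < j < k, diff_regions3 J i j k,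
      w i < w k, w k < w j & (w k : nat) = (w i).+1].

Definition is_Pi_down (n : nat) (J : {set 'I_n.-1}) (w p : 'S_n) : Prop :=
  [/\ in_SJ J p, J231_avoiding J p, weak_le p w &
      forall x : 'S_n, in_SJ J x -> J231_avoiding J x -> weak_le x w -> weak_le x p].

Definition is_Pi_up (n : nat) (J : {set 'I_n.-1}) (w p : 'S_n) : Prop :=
  [/\ in_SJ J p, J132_avoiding J p, weak_le w p &
      forall x : 'S_n, in_SJ J x -> J132_avoiding J x -> weak_le w x -> weak_le p x].

(* Main.v *)
Require Import Defs.
From mathcomp Require Import all_boot all_fingroup.
From mathcomp Require Import zify.
From Stdlib Require Import Classical.
Set Implicit Arguments. Unset Strict Implicit. Unset Printing Implicit Defensive.

Section Aux.
Variable n : nat.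
Variable J : {set 'I_n.-1}.

Lemma permv_inj (s : 'S_n) (p q : 'I_n) : (s p : nat) = s q -> p = q.
Proof. by move=> h; apply: (@perm_inj _ s); apply: val_inj. Qed.

Lemma perm_surj (s : 'S_n) (c : nat) : c < n -> exists q : 'I_n, (s q : nat) = c.
Proof. move=> hc; exists ((s^-1)%g (Ordinal hc)); by rewrite permKV. Qed.

Lemma weak_le_trans (a b c : 'S_n) : weak_le a b -> weak_le b c -> weak_le a c.
Proof. by move=> h1 h2 i j /h1 /h2. Qed.

Lemma weak_le_refl (a : 'S_n) : weak_le a a.
Proof. by []. Qed.

Lemma order_eq (a b : 'S_n) : weak_le a b -> weak_le b a ->
  forall p q : 'I_n, (a p < a q) = (b p < b q).
Proof.
move=> h1 h2 p q.
have Hab: forall p q : 'I_n, p < q -> (a q < a p) = (b q < b p).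
  move=> p' q' lt; apply/idP/idP => H.
  - by have /andP[_ ->] := h1 p' q' (introT andP (conj lt H)).
  - by have /andP[_ ->] := h2 p' q' (introT andP (conj lt H)).
case: (ltngtP p q) => [lt|lt|E0]; last by rewrite (val_inj E0) !ltnn.
- have na : (a p != a q :> nat) by apply/negP => /eqP/permv_inj E; move: lt; rewrite E ltnn.
  have nb : (b p != b q :> nat) by apply/negP => /eqP/permv_inj E; move: lt; rewrite E ltnn.
  have := Hab p q lt; lia.
- by rewrite Hab.
Qed.

Lemma weak_antisym (a b : 'S_n) : weak_le a b -> weak_le b a -> a = b.
Proof.
move=> h1 h2.
have key: forall (a b : 'S_n), (forall p q : 'I_n, (a p < a q) = (b p < b q)) ->
   forall m (p : 'I_n), (a p : nat) = m -> m <= b p.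
  move=> a' b' E; elim=> [|m IH] p hp //.
  have hm : m < n by have := ltn_ord (a' p); lia.
  have [q hq] := perm_surj a' hm.
  have := IH q hq.
  have : a' q < a' p by lia.
  rewrite E; lia.
have E := order_eq h1 h2.
apply/permP => p; apply: val_inj; apply/eqP; rewrite eqn_leq.
have E' : forall p q : 'I_n, (b p < b q) = (a p < a q) by move=> p' q'; rewrite E.
by rewrite (key a b E _ p erefl) (key b a E' _ p erefl).
Qed.

Lemma ivt_up (f : nat -> bool) lo hi : lo <= hi -> ~~ f lo -> f hi ->
  exists c, [/\ lo <= c, c < hi, ~~ f c & f c.+1].
Proof.
elim: hi => [|h IH] hle nlo fhi.
  by move: hle; rewrite leqn0 => /eqP E; move: nlo; rewrite E fhi.
case: (leqP lo h) => lh; last first.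
  have E : lo = h.+1 by lia.
  by move: nlo; rewrite E fhi.
case fh: (f h).
  by have [c [? ? ? ?]] := IH lh nlo fh; exists c; split => //; lia.
by exists h; rewrite fh; split => //; lia.
Qed.

Lemma ivt_down (f : nat -> bool) lo hi : lo <= hi -> f lo -> ~~ f hi ->
  exists c, [/\ lo <= c, c < hi, f c & ~~ f c.+1].
Proof.
move=> h1 h2 h3.
have h2' : ~~ ~~ f lo by rewrite negbK.
have [c [? ? h4 h5]] := @ivt_up (fun c => ~~ f c) lo hi h1 h2' h3.
by exists c; split => //; move: h4; rewrite negbK.
Qed.

Lemma same_region_sub (p q p' q' : 'I_n) : p <= p' -> p' <= q' -> q' <= q ->
  same_region J p q -> same_region J p' q'.
Proof.
move=> h1 h2 h3 /forallP H; apply/forallP => k; apply/implyP => /andP[k1 k2].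
apply: (implyP (H k)); apply/andP; split; lia.
Qed.

Lemma L3 (d x : 'S_n) (i j k : 'I_n) :
  weak_le d x -> i < j -> j < k ->
  ~~ same_region J i j -> ~~ same_region J j k -> ~~ same_region J i k ->
  (x i : nat) = (x k).+1 -> x i < x j -> J231_avoiding J d -> d i < d k.
Proof.
move=> le ij jk rij rjk rik xik xij av.
have ne : (d i != d k :> nat) by apply/negP => /eqP/permv_inj E; move: ij jk; rewrite E; lia.
rewrite ltn_neqAle ne /=; rewrite leqNgt; apply/negP => dki.
have dij : d i < d j.
  rewrite ltnNge leq_eqVlt negb_or; apply/andP; split.
    by apply/negP => /eqP/permv_inj E; move: ij; rewrite E ltnn.
  apply/negP => dji.
  have /andP[_] := le i j (introT andP (conj ij dji)); lia.
have R : forall q : 'I_n, d k <= d q <= d i -> (q <= i) || (k <= q).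
  move=> q /andP[q1 q2]; case: (leqP q i) => //= iq; case: (leqP k q) => //= qk; exfalso.
  have nqi : (d q != d i :> nat) by apply/negP => /eqP/permv_inj E; move: iq; rewrite E ltnn.
  have nqk : (x q != x k :> nat) by apply/negP => /eqP/permv_inj E; move: qk; rewrite E ltnn.
  have dqi : d q < d i by lia.
  have /andP[_ xqi] := le i q (introT andP (conj iq dqi)).
  have xqk : x q < x k by lia.
  have nqk' : (d q != d k :> nat) by apply/negP => /eqP/permv_inj E; move: qk; rewrite E ltnn.
  have dkq : d k < d q by lia.
  have /andP[_] := le q k (introT andP (conj qk dkq)); lia.
pose f c := [exists q : 'I_n, ((d q : nat) == c) && (q <= i)].
have fi : f (d i) by apply/existsP; exists i; rewrite eqxx leqnn.
have fk : ~~ f (d k).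
  apply/existsP => -[q /andP[/eqP /permv_inj E]]; rewrite E; lia.
have [c [c1 c2 fc fc1]] := ivt_up (ltnW dki) fk fi.
have [q1 /andP[/eqP hq1 q1i]] := existsP fc1.
have cn : c < n by have := ltn_ord (d i); lia.
have [q2 hq2] := perm_surj d cn.
have iq2 : i < q2.
  rewrite ltnNge; apply/negP => q2i; move/negP: fc; apply; apply/existsP; exists q2.
  by rewrite hq2 eqxx q2i.
have kq2 : k <= q2.
  have := R q2; rewrite hq2 c1 /= (ltnW (leq_trans (ltnSn c) (leq_trans _ c2))) //.
  by move=> /(_ isT) /orP[|//]; lia.
apply: av; exists q1, j, q2; split.
- apply/andP; split; lia.
- split; [|split].
  + by apply: contra rij; apply: same_region_sub; lia.
  + by apply: contra rjk; apply: same_region_sub; lia.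
  + by apply: contra rik; apply: same_region_sub; lia.
- lia.
- lia.
- lia.
Qed.

Lemma L5 (y t : 'S_n) (i j k : 'I_n) :
  weak_le y t -> i < j -> j < k ->
  ~~ same_region J i j -> ~~ same_region J j k -> ~~ same_region J i k ->
  (y k : nat) = (y i).+1 -> y k < y j -> J132_avoiding J t -> t k < t i.
Proof.
move=> le ij jk rij rjk rik yik ykj av.
have ne : (t i != t k :> nat) by apply/negP => /eqP/permv_inj E; move: ij jk; rewrite E; lia.
rewrite ltn_neqAle eq_sym ne /=; rewrite leqNgt; apply/negP => tik.
have tkj : t k < t j.
  by have /andP[_] := le j k (introT andP (conj jk ykj)).
have R : forall q : 'I_n, t i <= t q <= t k -> (q <= i) || (k <= q).
  move=> q /andP[q1 q2]; case: (leqP q i) => //= iq; case: (leqP k q) => //= qk; exfalso.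
  have nqk : (t q != t k :> nat) by apply/negP => /eqP/permv_inj E; move: qk; rewrite E ltnn.
  have tqk : t q < t k by lia.
  have yqk : y q <= y k.
    rewrite leqNgt; apply/negP => ykq.
    have /andP[_] := le q k (introT andP (conj qk ykq)); lia.
  have nyqk : (y q != y k :> nat) by apply/negP => /eqP/permv_inj E; move: qk; rewrite E ltnn.
  have nyqi : (y q != y i :> nat) by apply/negP => /eqP/permv_inj E; move: iq; rewrite E ltnn.
  have yqi : y q < y i by lia.
  have /andP[_] := le i q (introT andP (conj iq yqi)).
  have nti : (t q != t i :> nat) by apply/negP => /eqP/permv_inj E; move: iq; rewrite E ltnn.
  lia.
pose f c := [exists q : 'I_n, ((t q : nat) == c) && (q <= i)].
have fi : f (t i) by apply/existsP; exists i; rewrite eqxx leqnn.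
have fk : ~~ f (t k).
  apply/existsP => -[q /andP[/eqP /permv_inj E]]; rewrite E; lia.
have [c [c1 c2 fc fc1]] := ivt_down (ltnW tik) fi fk.
have [q1 /andP[/eqP hq1 q1i]] := existsP fc.
have cn : c.+1 < n by have := ltn_ord (t k); lia.
have [q2 hq2] := perm_surj t cn.
have iq2 : i < q2.
  rewrite ltnNge; apply/negP => q2i; move/negP: fc1; apply; apply/existsP; exists q2.
  by rewrite hq2 eqxx q2i.
have kq2 : k <= q2.
  have := R q2; rewrite hq2.
  have -> : t i <= c.+1 <= t k by apply/andP; split; lia.
  by move=> /(_ isT) /orP[|//]; lia.
apply: av; exists q1, j, q2; split.
- apply/andP; split; lia.
- split; [|split].
  + by apply: contra rij; apply: same_region_sub; lia.
  + by apply: contra rjk; apply: same_region_sub; lia.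
  + by apply: contra rik; apply: same_region_sub; lia.
- lia.
- lia.
- lia.
Qed.

Definition ninv (x : 'S_n) := #|[set pq : 'I_n * 'I_n | is_inv x pq.1 pq.2]|.

Lemma Kmain m : forall (x d t : 'S_n), ninv x < m -> in_SJ J x -> is_Pi_down J x d ->
  in_SJ J t -> J132_avoiding J t -> weak_le d t -> weak_le x t.
Proof.
elim: m => [//|m IH] x d t hm sx [sd ad ledx maxd] st aT ledt.
case: (classic (J231_avoiding J x)) => ax.
  exact: weak_le_trans (maxd x sx ax (@weak_le_refl x)) ledt.
have [i [j [k [/andP[ij jk] [rij [rjk rik]] xki xij xik]]]] := NNPP _ ax.
pose x' := (x * tperm (x i) (x k))%g.
have xinj : forall p q, ((x p : nat) == x q) = (p == q).
  by move=> p q; rewrite val_eqE (inj_eq perm_inj).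
have xv : forall p, (x' p : nat) = if p == i then (x k : nat) else if p == k then (x i : nat) else x p.
  move=> p; rewrite permM; case: (p =P i) => [->|pi]; first by rewrite tpermL.
  case: (p =P k) => [->|pk]; first by rewrite tpermR.
  rewrite tpermD //; rewrite (inj_eq perm_inj); apply/eqP => E; [exact: pi|exact: pk].
have agree : forall p q, ~~((p == i) && (q == k)) -> ~~((p == k) && (q == i)) ->
    (x' p < x' q) = (x p < x q).
  move=> p q h1 h2; rewrite !xv.
  have := xinj p i; have := xinj p k; have := xinj q i; have := xinj q k; have := xinj p q.
  move: h1 h2.
  case: (p == i); case: (q == k); case: (p == k); case: (q == i); rewrite /=; lia.
have agree' : forall p q, ~~((p == i) && (q == k)) -> is_inv x' p q = is_inv x p q.
  move=> p q h; rewrite /is_inv; case: (ltnP p q) => //= pq; apply: agree.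
  - apply/negP => /andP[/eqP a /eqP b]; move: pq; rewrite a b; lia.
  - by rewrite andbC.
have hki : (k == i) = false by apply/eqP => E; move: ij jk; rewrite E; lia.
have hji : (j == i) = false by apply/eqP => E; move: ij; rewrite E; lia.
have hjk : (j == k) = false by apply/eqP => E; move: jk; rewrite E; lia.
have nik : ~~ is_inv x' i k by rewrite /is_inv !xv !eqxx hki /=; lia.
have iik : is_inv x i k by rewrite /is_inv xki; apply/andP; split => //; lia.
have lex : weak_le x' x.
  move=> p q; case: (boolP ((p == i) && (q == k))) => [/andP[/eqP -> /eqP ->]|h].
    by move=> H; move: nik; rewrite H.
  by rewrite agree'.
have hm' : ninv x' < m.
  suff: ninv x' < ninv x by lia.
  apply: proper_card; apply/properP; split.
    by apply/subsetP => -[p q]; rewrite !inE /=; apply: lex.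
  by exists (i, k); rewrite !inE /= ?iik // (negbTE nik).
have sx' : in_SJ J x'.
  move=> p q hq hJ; rewrite agree; first exact: sx.
  - apply/negP => /andP[/eqP a /eqP b]; move: hq; rewrite a b; lia.
  - apply/negP => /andP[/eqP a /eqP b]; move: hq; rewrite a b; lia.
have ledx' : weak_le d x'.
  move=> p q; case: (boolP ((p == i) && (q == k))) => [/andP[/eqP -> /eqP ->]|h].
    move=> /andP[_ H].
    have := L3 ledx ij jk rij rjk rik xik xij ad; lia.
  by rewrite agree' //; apply: ledx.
have pd' : is_Pi_down J x' d.
  split => // y sy ay ley; apply: maxd => //; exact: weak_le_trans ley lex.
have le' := IH x' d t hm' sx' pd' st aT ledt.
move=> p q; case: (boolP ((p == i) && (q == k))) => [/andP[/eqP -> /eqP ->]|h].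
  move=> _; apply/andP; split; first by lia.
  apply: (L5 le' ij jk rij rjk rik) => //.
  - by rewrite !xv !eqxx hki.
  - rewrite !xv !eqxx hki hji hjk; lia.
by rewrite -agree' //; apply: le'.
Qed.
End Aux.

Theorem lemma3p17 (n : nat) (J : {set 'I_n.-1}) (u v du dv uu uv : 'S_n) :
  in_SJ J u -> in_SJ J v ->
  is_Pi_down J u du -> is_Pi_down J v dv ->
  is_Pi_up J u uu -> is_Pi_up J v uv ->
  du = dv -> uu = uv.
Proof.
move=> su sv pu pv [su' au leu minu] [sv' av lev minv] E.
have [_ _ ledu _] := pu. have [_ _ ledv _] := pv.
apply: weak_antisym.
- apply: minu => //; apply: (Kmain (m := (ninv u).+1)) pu sv' av _ => //.
  by rewrite E; apply: weak_le_trans ledv lev.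
- apply: minv => //; apply: (Kmain (m := (ninv v).+1)) pv su' au _ => //.
  by rewrite -E; apply: weak_le_trans ledu leu.
Qed.
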